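(* Let $\mathbb{H}$ be a finite-dimensional complex Hilbert space with $\dim\mathbb{H}\ge 2$, let $\alpha,\beta$ be nonzero complex numbers with $|\alpha|^2+|\beta|^2=1$, and let $|\phi\rangle\in\mathbb{H}$ be a fixed unit vector (fixed means: independent of the input state $|\psi\rangle$; it may be known or unknown). Then there is no probabilistic quantum transformation $\mathcal{F}$ from $\mathbb{H}\otimes\mathbb{H}$ to $\mathbb{H}$ such that for every pure state $\rho_\psi$ on $\mathbb{H}$, $$\mathcal{F}(\rho_\psi\otimes\rho_\phi)=\rho_\varphi,\qquad |\varphi\rangle\propto \alpha|\psi\rangle+\beta|\phi\rangle .$$
   Context: For a unit vector $|\psi\rangle$, $\rho_\psi=|\psi\rangle\langle\psi|$ denotes the corresponding pure state; vectors differing by a global phase define the same state, and $|\varphi\rangle\propto|\chi\rangle$ means $|\varphi\rangle$ equals the normalization of $|\chi\rangle$ up to a global phase (whenever $|\chi\rangle\neq0$). A probabilistic quantum transformation from $\mathbb{H}_1$ to $\mathbb{H}_2$ is a completely positive, trace-non-increasing linear map $\mathcal{F}$ from operators on $\mathbb{H}_1$ to operators on $\mathbb{H}_2$ (equivalently, a unitary on $\mathbb{H}_1$ tensored with ancilla and probe spaces followed by post-selection on a projective measurement outcome); the equation $\mathcal{F}(\rho)=\sigma$ between pure states means $\mathcal{F}(\rho)=p\,\sigma$ for some success probability $p>0$ (which may depend on $\rho$). *)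

(* Defs.v *)
(* Finite-dimensional complex Hilbert space C^n modelled as
   column vectors 'cV[C]_n over an arbitrary numClosedFieldType C (covers the
   complex numbers; all notions below are algebraic). *)
From HB Require Import structures.
From mathcomp Require Import all_boot all_order all_algebra.
Set Implicit Arguments. Unset Strict Implicit. Unset Printing Implicit Defensive.
Import Order.TTheory GRing.Theory Num.Theory.
Local Open Scope ring_scope.

Section Q.
Variable C : numClosedFieldType.

Definition adj m n (A : 'M[C]_(m, n)) : 'M[C]_(n, m) := (map_mx Num.conj A)^T.

Definition inner n (x y : 'cV[C]_n) : C := (adj x *m y) 0 0.
Definition unit_vec n (x : 'cV[C]_n) : Prop := inner x x = 1.

Definition proj n (x : 'cV[C]_n) : 'M[C]_n := x *m adj x.

(* positive semidefinite (over C this includes Hermitian) *)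
Definition psd n (A : 'M[C]_n) : Prop := forall x : 'cV[C]_n, 0 <= inner x (A *m x).

(* index splitting 'I_(m*n) ~ 'I_m * 'I_n (the mxvec ordering) *)
Definition tidx m n (k : 'I_(m * n)) : 'I_m * 'I_n :=
  enum_val (cast_ord (esym (@mxvec_cast m n)) k).

Definition kron m1 n1 m2 n2 (A : 'M[C]_(m1, n1)) (B : 'M[C]_(m2, n2))
  : 'M[C]_(m1 * m2, n1 * n2) :=
  \matrix_(k, l) (A (tidx k).1 (tidx l).1 * B (tidx k).2 (tidx l).2).

Definition block k m (X : 'M[C]_(k * m)) (a b : 'I_k) : 'M[C]_m :=
  \matrix_(r, c) X (mxvec_index a r) (mxvec_index b c).

(* ampliation id_k (x) F *)
Definition ampl k m p (F : 'M[C]_m -> 'M[C]_p) (X : 'M[C]_(k * m)) : 'M[C]_(k * p) :=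
  \matrix_(i, j) F (block X (tidx i).1 (tidx j).1) (tidx i).2 (tidx j).2.

Definition completely_positive m p (F : 'M[C]_m -> 'M[C]_p) : Prop :=
  forall (k : nat) (X : 'M[C]_(k * m)), psd X -> psd (ampl F X).

Definition trace_nonincreasing m p (F : 'M[C]_m -> 'M[C]_p) : Prop :=
  forall X : 'M[C]_m, psd X -> \tr (F X) <= \tr X.

Definition prob_qtrans m p (F : 'M[C]_m -> 'M[C]_p) : Prop :=
  linear F /\ completely_positive F /\ trace_nonincreasing F.

End Q.

(* Main.v *)
Require Import Defs.
From HB Require Import structures.
From mathcomp Require Import all_boot all_order all_algebra.
From mathcomp Require Import ring.
Import Order.TTheory GRing.Theory Num.Theory.
Local Open Scope ring_scope.

Section H.
Variable C : numClosedFieldType.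

Lemma projE n (x : 'cV[C]_n) j k : proj x j k = x j 0 * (x k 0)^*.
Proof. by rewrite /proj !mxE big_ord1 /adj !mxE. Qed.

Lemma scale_projE n (c : C) (x : 'cV[C]_n) j k :
  (c *: proj x) j k = c * (x j 0 * (x k 0)^*).
Proof. by rewrite [LHS]mxE projE. Qed.

Lemma innerE n (x : 'cV[C]_n) : inner x x = \sum_k (x k 0)^* * x k 0.
Proof. by rewrite /inner /adj !mxE; apply: eq_bigr => k _; rewrite !mxE. Qed.

Lemma inner_eq0 n (x : 'cV[C]_n) : inner x x = 0 -> x = 0.
Proof.
rewrite innerE.
under eq_bigr do rewrite mulrC -normCK.
move/psumr_eq0P => H.
have {}H := H (fun i _ => exprn_ge0 _ (normr_ge0 _)).
apply/matrixP => j b; rewrite ord1 mxE.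
have /eqP := H j isT.
by rewrite expf_eq0 /= normr_eq0 => /eqP.
Qed.

Lemma projN n (x : 'cV[C]_n) : proj (-x) = proj x.
Proof. by apply/matrixP => j k; rewrite !projE !mxE rmorphN mulrNN. Qed.

Lemma innerN n (x : 'cV[C]_n) : inner (-x) (-x) = inner x x.
Proof. by rewrite !innerE; apply: eq_bigr => k _; rewrite !mxE rmorphN mulrNN. Qed.

Lemma unit_delta n (i : 'I_n) : unit_vec (delta_mx i 0 : 'cV[C]_n).
Proof.
rewrite /unit_vec innerE (bigD1 i) //= big1 => [|k hk].
  by rewrite !mxE !eqxx /= rmorph1 mulr1 addr0.
by rewrite !mxE (negbTE hk) /= mulr0.
Qed.

End H.

Theorem theorem1 (C : numClosedFieldType) (n : nat) (hn : (2 <= n)%N)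
  (alpha beta : C) (ha : alpha != 0) (hb : beta != 0)
  (hab : `|alpha| ^+ 2 + `|beta| ^+ 2 = 1)
  (phi : 'cV[C]_n) (hphi : unit_vec phi) :
  ~ exists F : 'M[C]_(n * n) -> 'M[C]_n,
      prob_qtrans F /\
      forall psi : 'cV[C]_n, unit_vec psi ->
        let chi := alpha *: psi + beta *: phi in
        chi != 0 ->
        exists p : C, 0 < p /\
          F (kron (proj psi) (proj phi)) = p *: ((inner chi chi)^-1 *: proj chi).
Proof.
move=> [F [_ hF]].
have key : forall i j : 'I_n, j != i -> phi j 0 = 0.
  move=> i j hji.
  pose e := (delta_mx i 0 : 'cV[C]_n).
  have he : unit_vec e by apply: unit_delta.
  have hne : unit_vec (-e) by rewrite /unit_vec innerN.
  pose x := alpha *: e + beta *: phi.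
  pose y := alpha *: (-e) + beta *: phi.
  have xj : x j 0 = beta * phi j 0 by rewrite !mxE (negbTE hji) /= mulr0 add0r.
  have yj : y j 0 = beta * phi j 0 by rewrite !mxE (negbTE hji) /= oppr0 mulr0 add0r.
  have xi : x i 0 = alpha + beta * phi i 0 by rewrite !mxE !eqxx /= mulr1.
  have yi : y i 0 = - alpha + beta * phi i 0 by rewrite !mxE !eqxx /= mulrN1.
  have fromzero : forall z : 'cV[C]_n, z = 0 -> z j 0 = beta * phi j 0 -> phi j 0 = 0.
    move=> z -> zj; move: zj; rewrite mxE => /esym/eqP.
    by rewrite mulf_eq0 (negbTE hb) /= => /eqP.
  case: (eqVneq x 0) => [x0|xn0]; first exact: (fromzero x).
  case: (eqVneq y 0) => [y0|yn0]; first exact: (fromzero y).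
  have [p1 [hp1 E1]] := hF e he xn0.
  have [p2 [hp2 E2]] := hF (-e) hne yn0.
  rewrite projN in E2.
  have E := etrans (esym E1) E2.
  rewrite !scalerA in E.
  have [k hk] : exists k, x k 0 != 0.
    case: (pickP (fun k => x k 0 != 0)) => [k hk|h]; first by exists k.
    exfalso; move/negP: xn0; apply; apply/eqP/matrixP => a b.
    by rewrite ord1 [RHS]mxE; move: (h a) => /negbFE/eqP.
  have Ej := congr1 (fun M : 'M[C]_n => M j k) E.
  have Ei := congr1 (fun M : 'M[C]_n => M i k) E.
  rewrite /= !scale_projE in Ej Ei.
  rewrite -/x -/y in Ej Ei.
  rewrite xj yj in Ej. rewrite xi yi in Ei.
  set c1 := p1 * (inner x x)^-1 in Ej Ei.
  set c2 := p2 * (inner y y)^-1 in Ej Ei.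
  have ha1 : c1 * (x k 0)^* != 0.
    rewrite /c1 mulf_neq0 ?conjC_eq0 //.
    apply: mulf_neq0; first exact: lt0r_neq0.
    rewrite invr_eq0; apply/eqP => /inner_eq0; apply/eqP.
    by [].
  case: (eqVneq (phi j 0) 0) => // hphij; exfalso.
  have hab' : c1 * (x k 0)^* = c2 * (y k 0)^*.
    apply/eqP; rewrite -subr_eq0; apply/eqP.
    have : (c1 * (x k 0)^* - c2 * (y k 0)^*) * (beta * phi j 0) = 0.
      by rewrite -[RHS](subrr (c1 * (beta * phi j 0 * (x k 0)^*))) {2}Ej; ring.
    by move/eqP; rewrite mulf_eq0 mulf_eq0 (negbTE hb) (negbTE hphij) /= orbF => /eqP.
  have : (c1 * (x k 0)^*) * (2 * alpha) = 0.
    rewrite -[RHS](subrr (c1 * ((alpha + beta * phi i 0) * (x k 0)^*))) {2}Ei.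
    have -> : c2 * ((- alpha + beta * phi i 0) * (y k 0)^*)
       = (c2 * (y k 0)^*) * (- alpha + beta * phi i 0) by ring.
    rewrite -hab'; ring.
  move/eqP; rewrite mulf_eq0 (negbTE ha1) /= mulf_eq0 (negbTE ha) orbF.
  by rewrite pnatr_eq0.
have h0 : (0 < n)%N by apply: leq_trans hn.
have h1 : (1 < n)%N by [].
pose i0 := Ordinal h0. pose i1 := Ordinal h1.
have phi0 : phi = 0.
  apply/matrixP => j b; rewrite ord1 [RHS]mxE.
  case: (eqVneq j i0) => [->|hj]; last exact: key i0 j hj.
  by apply: (key i1).
move: hphi; rewrite /unit_vec phi0 /inner mulmx0 mxE => /eqP.
by rewrite eq_sym oner_eq0.
Qed.
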